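(* Let $s$ be an integer and let $G(x,L)=1+\operatorname{sgn}(s)\sum_{n\ge1}\gamma_n(x)L^n$ be a solution of the analytic Dyson-Schwinger equation \[ G(x,L) = 1 + \operatorname{sgn}(s)\sum_{k \geq 1}x^k\,G\!\left(x,\tfrac{d}{d(-\rho)}\right)^{1+sk}(e^{-L\rho}-1)F_{k}(\rho) \Big|_{\rho=0}, \qquad F_k(\rho) = \sum_{i=-1}^{\infty} f_{k,i+1}\rho^i . \] For each $k\ge1$ let $g_k(\rho)$ be a formal Laurent series with real coefficients of the form $g_k(\rho)=\frac{1}{\rho}+O(\rho^0)$. Then there exist unique real numbers $r_k$, $k\geq 1$, such that \[ \sum_{k \geq 1}x^kG\!\left(x,\tfrac{d}{d(-\rho)}\right)^{1+sk}(e^{-L\rho}-1)F_{k}(\rho) \Big|_{\rho=0} = \sum_{k \geq 1}x^kG\!\left(x,\tfrac{d}{d(-\rho)}\right)^{1+sk}(e^{-L\rho}-1)\,r_k\,g_k(\rho) \Big|_{\rho=0} \] as formal series in $x$ and $L$. In particular (taking $g_k(\rho)=1/(\rho(1-\rho))$) each $F_k$ may be replaced by a pure geometric series $r_k/(\rho(1-\rho))$ without any additional correction terms involving higher powers of $L$.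
   Context: $\operatorname{sgn}(s)\in\{-1,0,1\}$ denotes the sign of $s$. The coefficients $f_{k,j}$ are given real numbers, so each $F_k(\rho)$ is a formal Laurent series in $\rho$ with at most a simple pole at $0$. $G(x,L)$ is a formal power series in $x$ and $L$ with constant term $1$, and the $\gamma_n(x)$ are formal power series in $x$ without constant term; powers $G^{m}$ with $m$ a negative integer are formal inverses. Notation: for a formal series $H(x,L)$ with constant term $1$ and an integer $m$, write $H(x,L)^m=\sum_{n\ge0}c_n(x)L^n$; then $H\!\left(x,\frac{d}{d(-\rho)}\right)^{m}(e^{-L\rho}-1)F(\rho)\big|_{\rho=0}$ means $\sum_{n\ge0}c_n(x)\left(-\frac{d}{d\rho}\right)^n\big[(e^{-L\rho}-1)F(\rho)\big]$ evaluated at $\rho=0$, where $(e^{-L\rho}-1)F(\rho)$ is a formal power series in $\rho$ (the factor $e^{-L\rho}-1$ cancels the simple pole) whose coefficients are polynomials in $L$. Here $L$ appearing inside $e^{-L\rho}$ is the variable $L$ of the left-hand side, not the one substituted by the derivative operator. *)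

(* Defs.v *)
From Stdlib Require Import Reals ZArith Arith Bool.
Open Scope R_scope.

Fixpoint sumR (n : nat) (f : nat -> R) : R :=
  match n with
  | O => 0
  | S n' => sumR n' f + f n'
  end.

Definition sgnR (s : Z) : R := IZR (Z.sgn s).

(* A formal power series in x and L with real coefficients:
   A i n = coefficient of x^i L^n. *)
Definition ser2 := nat -> nat -> R.

Definition one2 : ser2 := fun i n => if (i =? 0)%nat && (n =? 0)%nat then 1 else 0.

Definition mul2 (A B : ser2) : ser2 :=
  fun i n => sumR (S i) (fun a => sumR (S n) (fun b => A a b * B (i - a)%nat (n - b)%nat)).

Fixpoint pow2 (A : ser2) (j : nat) : ser2 :=
  match j with
  | O => one2
  | S j' => mul2 A (pow2 A j')
  end.

Fixpoint fallingR (m : R) (j : nat) : R :=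
  match j with
  | O => 1
  | S j' => fallingR m j' * (m - INR j')
  end.
Definition binomR (m : Z) (j : nat) : R := fallingR (IZR m) j / INR (fact j).

(* Integer power G^m of a series G with constant term 1, via the binomial series
   G^m = (1+H)^m = sum_j binom(m,j) H^j,  H = G - 1.  When the x^0-part of G is 1
   (as in the theorem), [x^i] H^j = 0 for j > i, so the sum over j <= i is exact.
   For m < 0 this is the formal inverse power. *)
Definition powZ (G : ser2) (m : Z) : ser2 :=
  fun i n => sumR (S i) (fun j => binomR m j *
                 pow2 (fun a b => G a b - one2 a b) j i n).

(* A formal Laurent series F(rho) = sum_{j>=0} f j * rho^(j-1) (at most a simple pole).
   Coefficient of rho^q L^l in (e^{-L rho} - 1): nonzero only for l = q >= 1,
   equal to (-1)^q / q!. *)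
Definition expm1coef (q l : nat) : R :=
  if (1 <=? q)%nat && (l =? q)%nat then (-1) ^ q / INR (fact q) else 0.

(* Coefficient of rho^p L^l of the power series (e^{-L rho} - 1) F(rho):
   sum over q + (j - 1) = p, i.e. j = p + 1 - q, 0 <= q <= p + 1. *)
Definition expF (f : nat -> R) (p l : nat) : R :=
  sumR (S (S p)) (fun q => expm1coef q l * f (p + 1 - q)%nat).

(* Coefficient of L^l of  (-d/d rho)^n [ (e^{-L rho} - 1) F(rho) ] |_{rho = 0}. *)
Definition derivAt0 (f : nat -> R) (n l : nat) : R :=
  (-1) ^ n * INR (fact n) * expF f n l.

(* Coefficient of x^i L^l of  G(x, d/d(-rho))^m (e^{-L rho}-1) F(rho) |_{rho=0}
   = sum_n [x^i L^n](G^m) * [L^l] (-d/drho)^n[...]|_0.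
   The sum over n is taken for n <= i: for any solution G of the DSE one has
   [x^i L^n] G^m = 0 for n > i (gamma_n(x) = O(x^n)), so this is the exact value. *)
Definition opDSE (G : ser2) (m : Z) (f : nat -> R) : ser2 :=
  fun i l => sumR (S i) (fun n => powZ G m i n * derivAt0 f n l).

(* Coefficient of x^i L^l of
   sum_{k>=1} x^k G(x, d/d(-rho))^{1+sk} (e^{-L rho}-1) F_k(rho) |_{rho=0},
   where F k j = f_{k,j}, i.e. F_k(rho) = sum_j F k j rho^(j-1). *)
Definition DSEsum (G : ser2) (s : Z) (F : nat -> nat -> R) : ser2 :=
  fun i l => sumR i (fun t =>
     opDSE G (1 + s * Z.of_nat (S t))%Z (F (S t)) (i - S t)%nat l).

Definition DSE_form (s : Z) (G : ser2) : Prop :=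
  exists gamma : nat -> nat -> R,
    (forall n, gamma n O = 0) /\
    (forall i n, G i n = one2 i n + sgnR s * (if (n =? 0)%nat then 0 else gamma n i)).

Definition DSE_solution (s : Z) (F : nat -> nat -> R) (G : ser2) : Prop :=
  forall i l, G i l = one2 i l + sgnR s * DSEsum G s F i l.

(* Main.v *)
Require Import Defs.
From Stdlib Require Import Reals ZArith Arith Lia Lra Ring Field FunctionalExtensionality.
Open Scope R_scope.

Lemma sumR_ext n f g : (forall k, (k < n)%nat -> f k = g k) -> sumR n f = sumR n g.
Proof. induction n; simpl; intros H; [reflexivity|]. rewrite IHn by (intros; apply H; lia). rewrite H by lia. reflexivity. Qed.

Lemma sumR_add n f g : sumR n (fun k => f k + g k) = sumR n f + sumR n g.
Proof. induction n; simpl; [ring|]. rewrite IHn; ring. Qed.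

Lemma sumR_sub n f g : sumR n (fun k => f k - g k) = sumR n f - sumR n g.
Proof. induction n; simpl; [ring|]. rewrite IHn; ring. Qed.

Lemma sumR_scal n c f : sumR n (fun k => c * f k) = c * sumR n f.
Proof. induction n; simpl; [ring|]. rewrite IHn; ring. Qed.

Lemma sumR_scalr n c f : sumR n (fun k => f k * c) = sumR n f * c.
Proof. induction n; simpl; [ring|]. rewrite IHn; ring. Qed.

Lemma sumR_zero n f : (forall k, (k < n)%nat -> f k = 0) -> sumR n f = 0.
Proof. induction n; simpl; intros H; [reflexivity|]. rewrite IHn by (intros; apply H; lia). rewrite H by lia. ring. Qed.

Lemma sumR_shift n f : sumR (S n) f = f 0%nat + sumR n (fun k => f (S k)).
Proof. induction n; simpl in *; [ring|]. rewrite IHn. ring. Qed.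

Lemma sumR_swap n m f : sumR n (fun a => sumR m (fun b => f a b)) = sumR m (fun b => sumR n (fun a => f a b)).
Proof. induction n; simpl. - symmetry; apply sumR_zero; auto. - rewrite IHn, <- sumR_add. reflexivity. Qed.

Lemma sumR_rev n f : sumR n f = sumR n (fun k => f (n - 1 - k)%nat).
Proof. induction n; [reflexivity|]. rewrite (sumR_shift n (fun k => f (S n - 1 - k)%nat)).
  change (sumR (S n) f) with (sumR n f + f n). rewrite IHn.
  replace (S n - 1 - 0)%nat with n by lia. rewrite Rplus_comm. f_equal.
  apply sumR_ext; intros; f_equal; lia. Qed.

Lemma sumR_trunc N M f : (M <= N)%nat -> (forall j, (M <= j)%nat -> (j < N)%nat -> f j = 0) -> sumR N f = sumR M f.
Proof. induction N; intros HM H. - replace M with 0%nat by lia; reflexivity.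
  - destruct (Nat.eq_dec M (S N)). subst; reflexivity. simpl. rewrite IHN by (try lia; intros; apply H; lia).
    rewrite H by lia. ring. Qed.

Lemma sumR_single N k f : (forall q, (q < N)%nat -> q <> k -> f q = 0) -> sumR N f = if (k <? N)%nat then f k else 0.
Proof. induction N; intros H; simpl; [reflexivity|].
  rewrite IHN by (intros; apply H; lia).
  destruct (Nat.eq_dec k N). subst. rewrite (proj2 (Nat.ltb_ge N N)) by lia. rewrite (proj2 (Nat.ltb_lt N (S N))) by lia. ring.
  rewrite (H N) by lia. destruct (k <? N)%nat eqn:E1; destruct (k <? S N)%nat eqn:E2; try ring;
  apply Nat.ltb_lt in E1 || apply Nat.ltb_ge in E1; apply Nat.ltb_lt in E2 || apply Nat.ltb_ge in E2; lia. Qed.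

Lemma sumR_offset N l psi : sumR N (fun n => if (l <=? n)%nat then psi (n - l)%nat else 0) = sumR (N - l) psi.
Proof. induction N; [reflexivity|]. change (sumR (S N) ?f) with (sumR N f + f N). rewrite IHN. destruct (l <=? N)%nat eqn:E.
  apply Nat.leb_le in E. replace (S N - l)%nat with (S (N - l)) by lia. reflexivity.
  apply Nat.leb_gt in E. replace (S N - l)%nat with 0%nat by lia. replace (N - l)%nat with 0%nat by lia. simpl; ring. Qed.

Lemma sumR_tri i phi : sumR (S i) (fun a => sumR (S a) (fun a' => phi a' (a - a')%nat))
  = sumR (S i) (fun a' => sumR (S (i - a')) (fun c => phi a' c)).
Proof. induction i.
  - simpl. ring.
  - rewrite (sumR_ext (S (S i)) (fun a' => sumR (S (S i - a')) _)
      (fun a' => if (a' <? S i)%nat then sumR (S (i - a')) (fun c => phi a' c) + phi a' (S i - a')%nat else phi a' 0%nat)).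
    2:{ intros k Hk. destruct (k <? S i)%nat eqn:E. apply Nat.ltb_lt in E. replace (S (S i - k)) with (S (S (i - k))) by lia.
        change (sumR (S (S (i-k))) ?f) with (sumR (S (i-k)) f + f (S (i-k))). cbv beta. do 2 f_equal. lia. apply Nat.ltb_ge in E. replace (S (S i - k)) with 1%nat by lia. simpl. ring. }
    change (sumR (S (S i)) ?f) with (sumR (S i) f + f (S i)) at 1.
    rewrite IHi.
    change (sumR (S (S i)) (fun a' => if (a' <? S i)%nat then _ else _)) with
      (sumR (S i) (fun a' => if (a' <? S i)%nat then sumR (S (i - a')) (fun c => phi a' c) + phi a' (S i - a')%nat else phi a' 0%nat)
       + (if (S i <? S i)%nat then sumR (S (i - S i)) (fun c => phi (S i) c) + phi (S i) (S i - S i)%nat else phi (S i) 0%nat)).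
    rewrite Nat.ltb_irrefl.
    rewrite (sumR_ext (S i) (fun a' => if (a' <? S i)%nat then _ else _) (fun a' => sumR (S (i - a')) (fun c => phi a' c) + phi a' (S i - a')%nat)).
    2:{ intros k Hk. rewrite (proj2 (Nat.ltb_lt k (S i))) by lia. reflexivity. }
    rewrite sumR_add. change (sumR (S (S i)) (fun a' => phi a' (S i - a')%nat)) with
      (sumR (S i) (fun a' => phi a' (S i - a')%nat) + phi (S i) (S i - S i)%nat).
    replace (S i - S i)%nat with 0%nat by lia. ring. Qed.

Lemma sumR_tri' i phi F : (forall a a', (a' <= a)%nat -> (a <= i)%nat -> F a a' = phi a' (a - a')%nat) ->
  sumR (S i) (fun a => sumR (S a) (F a)) = sumR (S i) (fun a' => sumR (S (i - a')) (fun c => phi a' c)).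
Proof. intros H. rewrite <- sumR_tri. apply sumR_ext; intros a Ha. apply sumR_ext; intros a' Ha'. apply H; lia. Qed.

Lemma fallingR_S x j : fallingR x (S j) = x * fallingR (x - 1) j.
Proof. revert x; induction j; intros x. simpl. ring.
  change (fallingR x (S (S j))) with (fallingR x (S j) * (x - INR (S j))).
  change (fallingR (x - 1) (S j)) with (fallingR (x-1) j * (x - 1 - INR j)).
  rewrite IHj. rewrite S_INR. ring. Qed.

Lemma binomR_0 m : binomR m 0 = 1.
Proof. unfold binomR; simpl; field. Qed.

Lemma binomR_deriv m j : INR (S j) * binomR m (S j) = IZR m * binomR (m - 1) j.
Proof. unfold binomR. rewrite fallingR_S, minus_IZR. change (fact (S j)) with (S j * fact j)%nat.
  rewrite mult_INR. field. split; [apply not_0_INR, fact_neq_0 | apply not_0_INR; lia]. Qed.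

Lemma binomR_pascal m j : binomR m (S j) = binomR (m - 1) (S j) + binomR (m - 1) j.
Proof. unfold binomR. rewrite fallingR_S, minus_IZR. simpl fallingR. change (fact (S j)) with (S j * fact j)%nat.
  rewrite mult_INR, S_INR. field. split; [apply not_0_INR, fact_neq_0 | ]. pose proof (pos_INR j). lra. Qed.

Definition add2 (A B : ser2) : ser2 := fun i n => A i n + B i n.
Definition opp2 (A : ser2) : ser2 := fun i n => - A i n.
Definition sub2 (A B : ser2) : ser2 := fun i n => A i n - B i n.
Definition zero2 : ser2 := fun _ _ => 0.

Ltac fext := let i := fresh "i" in let n := fresh "n" in
  apply functional_extensionality; intro i; apply functional_extensionality; intro n.

Lemma mul2_comm A B : mul2 A B = mul2 B A.
Proof. fext. unfold mul2. rewrite sumR_rev. apply sumR_ext; intros a Ha.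
  rewrite sumR_rev. apply sumR_ext; intros b Hb.
  replace (S i - 1 - a)%nat with (i - a)%nat by lia. replace (S n - 1 - b)%nat with (n - b)%nat by lia.
  replace (i - (i - a))%nat with a by lia. replace (n - (n - b))%nat with b by lia. ring. Qed.

Lemma mul2_addl A B C : mul2 (add2 A B) C = add2 (mul2 A C) (mul2 B C).
Proof. fext. unfold mul2, add2. rewrite <- sumR_add. apply sumR_ext; intros.
  rewrite <- sumR_add. apply sumR_ext; intros. ring. Qed.

Lemma mul2_one A : mul2 one2 A = A.
Proof. fext. unfold mul2. rewrite sumR_shift.
  rewrite (sumR_zero i (fun k => sumR _ _)). 2:{ intros. apply sumR_zero. intros. unfold one2. simpl. ring. }
  rewrite sumR_shift. rewrite sumR_zero. 2:{ intros. unfold one2. simpl. ring. }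
  unfold one2; simpl. rewrite !Nat.sub_0_r. ring. Qed.

Lemma mul2_assoc A B C : mul2 A (mul2 B C) = mul2 (mul2 A B) C.
Proof. fext. unfold mul2.
  symmetry.
  rewrite (sumR_ext (S i) _ (fun a => sumR (S a) (fun a' => sumR (S n) (fun b => sumR (S b) (fun b' =>
       A a' b' * B (a - a')%nat (b - b')%nat * C (i - a)%nat (n - b)%nat))))).
  2:{ intros a Ha. rewrite sumR_swap. apply sumR_ext; intros b Hb. rewrite <- sumR_scalr.
      apply sumR_ext; intros a' Ha'. rewrite <- sumR_scalr. reflexivity. }
  rewrite (sumR_tri' i (fun a' c => sumR (S n) (fun b' => sumR (S (n - b')) (fun d =>
       A a' b' * B c d * C (i - (a' + c))%nat (n - (b' + d))%nat)))).
  2:{ intros a a' H1 H2. 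
      apply (sumR_tri' n (fun b' d => A a' b' * B (a - a')%nat d * C (i - (a' + (a - a')))%nat (n - (b' + d))%nat)).
      intros b b' H3 H4. do 3 f_equal; lia. }
  apply sumR_ext; intros a' Ha'.
  rewrite sumR_swap. apply sumR_ext; intros b' Hb'. rewrite <- sumR_scal.
  apply sumR_ext; intros c Hc. rewrite <- sumR_scal. apply sumR_ext; intros d Hd.
  replace (i - a' - c)%nat with (i - (a' + c))%nat by lia. replace (n - b' - d)%nat with (n - (b' + d))%nat by lia. ring. Qed.

Lemma ser2_ring : ring_theory zero2 one2 add2 mul2 sub2 opp2 eq.
Proof. constructor; intros.
  - fext. unfold add2, zero2. ring.
  - fext. unfold add2. ring.
  - fext. unfold add2. ring.
  - apply mul2_one.
  - apply mul2_comm.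
  - apply mul2_assoc.
  - apply mul2_addl.
  - fext. unfold sub2, add2, opp2. ring.
  - fext. unfold add2, opp2, zero2. ring. Qed.

Add Ring ser2R : ser2_ring.

Definition cst (c : R) : ser2 := fun i n => if andb (i =? 0)%nat (n =? 0)%nat then c else 0.
Definition scal (c : R) (A : ser2) : ser2 := fun i n => c * A i n.

Lemma mul2_cst_pt c A i n : mul2 (cst c) A i n = c * A i n.
Proof. unfold mul2. rewrite sumR_shift, (sumR_zero i). 2:{ intros; apply sumR_zero; intros; unfold cst; simpl; ring. }
  rewrite sumR_shift, sumR_zero. 2:{ intros; unfold cst; simpl; ring. } unfold cst; simpl. rewrite !Nat.sub_0_r. ring. Qed.

Lemma scal_cst c A : scal c A = mul2 (cst c) A.
Proof. fext. rewrite mul2_cst_pt. reflexivity. Qed.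

Lemma cst_add a b : cst (a + b) = add2 (cst a) (cst b).
Proof. fext. unfold cst, add2. destruct (andb _ _); ring. Qed.
Lemma cst_mul a b : cst (a * b) = mul2 (cst a) (cst b).
Proof. fext. rewrite mul2_cst_pt. unfold cst. destruct (andb _ _); ring. Qed.
Lemma cst_one : cst 1 = one2.
Proof. reflexivity. Qed.
Lemma cst_zero : cst 0 = zero2.
Proof. fext. unfold cst, zero2. destruct (andb _ _); ring. Qed.

Definition dL (A : ser2) : ser2 := fun i n => INR (S n) * A i (S n).
Definition xdx (A : ser2) : ser2 := fun i n => INR i * A i n.
Fixpoint dLn (j : nat) (A : ser2) : ser2 := match j with O => A | S j' => dL (dLn j' A) end.
Definition shiftk (k : nat) (A : ser2) : ser2 := fun i n => if (k <=? i)%nat then A (i - k)%nat n else 0.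
Definition sum2 (N : nat) (F : nat -> ser2) : ser2 := fun i n => sumR N (fun j => F j i n).

Lemma sum2_S N F : sum2 (S N) F = add2 (sum2 N F) (F N).
Proof. reflexivity. Qed.
Lemma sum2_0 F : sum2 0 F = zero2.
Proof. reflexivity. Qed.

Lemma dL_add A B : dL (add2 A B) = add2 (dL A) (dL B).
Proof. fext. unfold dL, add2. ring. Qed.
Lemma dL_sub A B : dL (sub2 A B) = sub2 (dL A) (dL B).
Proof. fext. unfold dL, sub2. ring. Qed.
Lemma dL_zero : dL zero2 = zero2.
Proof. fext. unfold dL, zero2. ring. Qed.
Lemma xdx_add A B : xdx (add2 A B) = add2 (xdx A) (xdx B).
Proof. fext. unfold xdx, add2. ring. Qed.
Lemma xdx_sub A B : xdx (sub2 A B) = sub2 (xdx A) (xdx B).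
Proof. fext. unfold xdx, sub2. ring. Qed.
Lemma dL_cst c : dL (cst c) = zero2.
Proof. fext. unfold dL, cst, zero2. simpl. rewrite Bool.andb_false_r. ring. Qed.
Lemma xdx_cst c : xdx (cst c) = zero2.
Proof. fext. unfold xdx, cst, zero2. destruct i; simpl. ring. ring. Qed.
Lemma dL_one : dL one2 = zero2.
Proof. rewrite <- cst_one. apply dL_cst. Qed.
Lemma xdx_one : xdx one2 = zero2.
Proof. rewrite <- cst_one. apply xdx_cst. Qed.
Lemma dL_xdx A : dL (xdx A) = xdx (dL A).
Proof. fext. unfold dL, xdx. ring. Qed.

Lemma dL_mul A B : dL (mul2 A B) = add2 (mul2 (dL A) B) (mul2 A (dL B)).
Proof. fext. unfold dL, mul2, add2. rewrite <- sumR_add, <- sumR_scal. apply sumR_ext; intros a Ha.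
  set (al := fun b => A a b). set (be := fun b => B (i - a)%nat b).
  change (INR (S n) * sumR (S (S n)) (fun b => al b * be (S n - b)%nat) =
    sumR (S n) (fun b => INR (S b) * al (S b) * be (n - b)%nat) + sumR (S n) (fun b => al b * (INR (S (n - b)) * be (S (n - b))))).
  rewrite <- sumR_scal.
  rewrite (sumR_ext (S (S n)) _ (fun b => INR b * al b * be (S n - b)%nat + al b * (INR (S n - b) * be (S n - b)%nat))).
  2:{ intros b Hb. rewrite <- Rmult_assoc, (Rmult_comm (INR (S n))).
      replace (INR (S n)) with (INR b + INR (S n - b)) by (rewrite <- plus_INR; f_equal; lia). ring. }
  rewrite sumR_add. f_equal.
  - rewrite sumR_shift. simpl (INR 0). rewrite Rmult_0_l, Rmult_0_l, Rplus_0_l.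
    apply sumR_ext; intros b Hb. reflexivity.
  - change (sumR (S (S n)) ?f) with (sumR (S n) f + f (S n)). cbv beta. rewrite Nat.sub_diag. simpl (INR 0).
    rewrite Rmult_0_l, Rmult_0_r, Rplus_0_r. apply sumR_ext; intros b Hb.
    replace (S n - b)%nat with (S (n - b)) by lia. reflexivity. Qed.

Lemma xdx_mul A B : xdx (mul2 A B) = add2 (mul2 (xdx A) B) (mul2 A (xdx B)).
Proof. fext. unfold xdx, mul2, add2. rewrite <- sumR_add, <- sumR_scal. apply sumR_ext; intros a Ha.
  rewrite <- !sumR_scal, <- sumR_add. apply sumR_ext; intros b Hb.
  replace (INR i) with (INR a + INR (i - a)) by (rewrite <- plus_INR; f_equal; lia). ring. Qed.

Lemma dLn_pt j A i l : dLn j A i l = INR (fact (l + j)) / INR (fact l) * A i (l + j)%nat.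
Proof. revert l. induction j; intros l; simpl dLn.
  - rewrite Nat.add_0_r. field. apply not_0_INR, fact_neq_0.
  - unfold dL. rewrite IHj. replace (S l + j)%nat with (l + S j)%nat by lia.
    change (fact (S l)) with (S l * fact l)%nat. rewrite mult_INR. field.
    split; [apply not_0_INR, fact_neq_0 | apply not_0_INR; lia]. Qed.

Definition agree (i : nat) (A B : ser2) : Prop := forall a b, (a <= i)%nat -> A a b = B a b.

Lemma agree_refl i A : agree i A A. Proof. intros a b _; reflexivity. Qed.
Lemma agree_sym i A B : agree i A B -> agree i B A. Proof. intros H a b h; symmetry; auto. Qed.
Lemma agree_trans i A B C : agree i A B -> agree i B C -> agree i A C.
Proof. intros H1 H2 a b h; rewrite H1; auto. Qed.
Lemma agree_le i j A B : (j <= i)%nat -> agree i A B -> agree j A B.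
Proof. intros h H a b h'; apply H; lia. Qed.
Lemma agree_eq i A B : A = B -> agree i A B. Proof. intros ->; apply agree_refl. Qed.
Lemma agree_add i A B A' B' : agree i A A' -> agree i B B' -> agree i (add2 A B) (add2 A' B').
Proof. intros H1 H2 a b h; unfold add2; rewrite H1, H2; auto. Qed.
Lemma agree_sub i A B A' B' : agree i A A' -> agree i B B' -> agree i (sub2 A B) (sub2 A' B').
Proof. intros H1 H2 a b h; unfold sub2; rewrite H1, H2; auto. Qed.
Lemma agree_mul i A B A' B' : agree i A A' -> agree i B B' -> agree i (mul2 A B) (mul2 A' B').
Proof. intros H1 H2 a b h; unfold mul2. apply sumR_ext; intros a' Ha'. apply sumR_ext; intros b' Hb'.
  rewrite H1, H2 by lia. reflexivity. Qed.
Lemma agree_dL i A B : agree i A B -> agree i (dL A) (dL B).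
Proof. intros H a b h; unfold dL; rewrite H; auto. Qed.
Lemma agree_xdx i A B : agree i A B -> agree i (xdx A) (xdx B).
Proof. intros H a b h; unfold xdx; rewrite H; auto. Qed.
Lemma agree_dLn i j A B : agree i A B -> agree i (dLn j A) (dLn j B).
Proof. intros H; induction j; simpl; auto using agree_dL. Qed.

Definition ordp (p : nat) (A : ser2) : Prop := forall a b, (a < p)%nat -> A a b = 0.
Lemma ord_mul j A B : ordp 1 A -> ordp j B -> ordp (S j) (mul2 A B).
Proof. intros HA HB a b h. unfold mul2. apply sumR_zero; intros a' Ha'. apply sumR_zero; intros b' Hb'.
  destruct a'. rewrite HA by lia; ring. rewrite HB by lia; ring. Qed.
Lemma ord_agree p A : ordp (S p) A -> agree p A zero2.
Proof. intros H a b h; apply H; lia. Qed.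

Definition degb (d : nat) (A : ser2) : Prop := forall a b, (a < b + d)%nat -> A a b = 0.
Lemma degb_mul A B : degb 0 A -> degb 0 B -> degb 0 (mul2 A B).
Proof. intros HA HB a b h. unfold mul2. apply sumR_zero; intros a' Ha'. apply sumR_zero; intros b' Hb'.
  destruct (Nat.lt_ge_cases a' b'). rewrite HA by lia; ring. rewrite HB by lia; ring. Qed.
Lemma degb_add A B : degb 0 A -> degb 0 B -> degb 0 (add2 A B).
Proof. intros HA HB a b h; unfold add2; rewrite HA, HB by lia; ring. Qed.
Lemma degb_sub A B : degb 0 A -> degb 0 B -> degb 0 (sub2 A B).
Proof. intros HA HB a b h; unfold sub2; rewrite HA, HB by lia; ring. Qed.
Lemma degb_cst c : degb 0 (cst c).
Proof. intros a b h; unfold cst. destruct b; [lia|]. simpl. rewrite Bool.andb_false_r. reflexivity. Qed.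
Lemma degb_one : degb 0 one2.
Proof. rewrite <- cst_one; apply degb_cst. Qed.
Lemma degb_dL d A : degb d A -> degb (S d) (dL A).
Proof. intros H a b h; unfold dL; rewrite H by lia; ring. Qed.
Lemma degb_dLn j A : degb 0 A -> degb j (dLn j A).
Proof. intros H; induction j; simpl; auto using degb_dL. Qed.
Lemma degb_scal c A : degb 0 A -> degb 0 (scal c A).
Proof. intros H a b h; unfold scal; rewrite H by lia; ring. Qed.
Lemma degb_sum2 N F : (forall j, degb 0 (F j)) -> degb 0 (sum2 N F).
Proof. intros H a b h; unfold sum2; apply sumR_zero; intros; apply H; lia. Qed.

Section Main.
Variable s : Z.
Variable F : nat -> nat -> R.
Variable G : ser2.
Hypothesis hform : DSE_form s G.
Hypothesis hsol : DSE_solution s F G.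

Definition sR := IZR s.
Definition gm : ser2 := fun i n => if (n =? 0)%nat then G i 1%nat else 0.
Definition Dop (c : R) (X : ser2) : ser2 :=
  sub2 (dL X) (mul2 gm (add2 (mul2 (cst c) X) (mul2 (cst sR) (xdx X)))).
Definition delta (X : ser2) : ser2 := sub2 (dL X) (mul2 gm (mul2 (cst sR) (xdx X))).
Definition Hser : ser2 := fun a b => G a b - one2 a b.
Definition PZ (m : Z) (N : nat) : ser2 := sum2 N (fun j => scal (binomR m j) (pow2 Hser j)).
Definition E : ser2 := Dop 1 G.

Lemma G_L0 j : G j 0%nat = one2 j 0%nat.
Proof. destruct hform as [gam [h1 h2]]. rewrite h2. simpl. ring. Qed.
Lemma G_x0 b : G 0%nat b = one2 0%nat b.
Proof. destruct hform as [gam [h1 h2]]. rewrite h2. destruct (b =? 0)%nat; [ring|]. rewrite h1; ring. Qed.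
Lemma G01 : G 0%nat 1%nat = 0.
Proof. rewrite G_x0. reflexivity. Qed.
Lemma Hser_ord : ordp 1 Hser.
Proof. intros a b h. replace a with 0%nat by lia. unfold Hser. rewrite G_x0. ring. Qed.
Lemma G_eq : G = add2 one2 Hser.
Proof. fext. unfold add2, Hser. ring. Qed.

Lemma DSEsum_degb H : degb 0 (DSEsum G s H).
Proof. intros a b h. unfold DSEsum. apply sumR_zero; intros t Ht. unfold opDSE. apply sumR_zero; intros n Hn.
  unfold derivAt0, expF. rewrite (sumR_zero (S (S n))). ring. intros q Hq. unfold expm1coef.
  destruct (b =? q)%nat eqn:E1. apply Nat.eqb_eq in E1. lia. rewrite Bool.andb_false_r. ring. Qed.

Lemma G_degb : degb 0 G.
Proof. intros a b h. rewrite hsol. rewrite DSEsum_degb by lia. unfold one2.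
  destruct b; [lia|]. simpl. rewrite Bool.andb_false_r. ring. Qed.

Lemma Hser_degb : degb 0 Hser.
Proof. intros a b h. unfold Hser. rewrite G_degb, degb_one by lia. ring. Qed.

Lemma pow_ord j : ordp j (pow2 Hser j).
Proof. induction j; simpl. intros a b h; lia. apply ord_mul; auto using Hser_ord. Qed.
Lemma pow_degb j : degb 0 (pow2 Hser j).
Proof. induction j; simpl. apply degb_one. apply degb_mul; auto using Hser_degb. Qed.

Lemma PZ_pt m N i n : PZ m N i n = sumR N (fun j => binomR m j * pow2 Hser j i n).
Proof. reflexivity. Qed.

Lemma PZ_agree2 m N N' i : (i < N)%nat -> (i < N')%nat -> agree i (PZ m N) (PZ m N').
Proof. intros h1 h2 a b h. rewrite !PZ_pt. rewrite (sumR_trunc N (S a)), (sumR_trunc N' (S a)); try lia; auto;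
  intros j h3 h4; rewrite pow_ord by lia; ring. Qed.

Lemma PZ_agree m N i : (i < N)%nat -> agree i (powZ G m) (PZ m N).
Proof. intros h1 a b h. change (powZ G m a b) with (PZ m (S a) a b). apply PZ_agree2 with (i := a); lia. Qed.

Lemma powZ_degb m : degb 0 (powZ G m).
Proof. intros a b h. rewrite (PZ_agree m (S a) a) by lia. apply degb_sum2; [|lia].
  intros j; apply degb_scal, pow_degb. Qed.

Lemma gm_dL : dL gm = zero2.
Proof. fext. unfold dL, gm, zero2. simpl. ring. Qed.

Lemma mul_gm_pt Y i n : mul2 gm Y i n = sumR (S i) (fun a => G a 1%nat * Y (i - a)%nat n).
Proof. unfold mul2. apply sumR_ext; intros a Ha. rewrite sumR_shift, sumR_zero.
  unfold gm; simpl. rewrite Nat.sub_0_r. ring. intros; unfold gm; simpl; ring. Qed.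

Lemma delta_mul A B : delta (mul2 A B) = add2 (mul2 (delta A) B) (mul2 A (delta B)).
Proof. unfold delta. rewrite dL_mul, xdx_mul. ring. Qed.
Lemma delta_add A B : delta (add2 A B) = add2 (delta A) (delta B).
Proof. unfold delta. rewrite dL_add, xdx_add. ring. Qed.
Lemma delta_cst c : delta (cst c) = zero2.
Proof. unfold delta. rewrite dL_cst, xdx_cst. ring. Qed.
Lemma delta_one : delta one2 = zero2.
Proof. rewrite <- cst_one. apply delta_cst. Qed.
Lemma delta_zero : delta zero2 = zero2.
Proof. rewrite <- cst_zero, delta_cst. symmetry; apply cst_zero. Qed.
Lemma delta_scal c A : delta (mul2 (cst c) A) = mul2 (cst c) (delta A).
Proof. rewrite delta_mul, delta_cst. ring. Qed.

Lemma delta_pow X j : delta (pow2 X (S j)) = mul2 (cst (INR (S j))) (mul2 (pow2 X j) (delta X)).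
Proof. induction j.
  - simpl pow2. rewrite delta_mul, delta_one. simpl INR. rewrite cst_one. ring.
  - change (pow2 X (S (S j))) with (mul2 X (pow2 X (S j))). rewrite delta_mul, IHj.
    rewrite (S_INR (S j)), cst_add, cst_one. change (pow2 X (S j)) with (mul2 X (pow2 X j)). ring. Qed.

Lemma Dop_delta c X : Dop c X = sub2 (delta X) (mul2 (cst c) (mul2 gm X)).
Proof. unfold Dop, delta. ring. Qed.

Lemma PZ_S m N : PZ m (S N) = add2 (PZ m N) (mul2 (cst (binomR m N)) (pow2 Hser N)).
Proof. unfold PZ. rewrite sum2_S, scal_cst. reflexivity. Qed.

Lemma PZ_delta m N : delta (PZ m (S N)) = mul2 (cst (IZR m)) (mul2 (PZ (m - 1) N) (delta Hser)).
Proof. induction N.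
  - rewrite PZ_S. unfold PZ at 1. rewrite sum2_0. simpl pow2. rewrite delta_add, delta_scal, delta_one, delta_zero.
    unfold PZ; rewrite sum2_0. ring.
  - rewrite PZ_S, delta_add, IHN, delta_scal, delta_pow. rewrite (PZ_S (m-1) N).
    assert (Hc : mul2 (cst (binomR m (S N))) (cst (INR (S N))) = mul2 (cst (IZR m)) (cst (binomR (m - 1) N))).
    { rewrite <- !cst_mul, <- binomR_deriv. f_equal; ring. }
    transitivity (add2 (mul2 (cst (IZR m)) (mul2 (PZ (m - 1) N) (delta Hser)))
      (mul2 (mul2 (cst (binomR m (S N))) (cst (INR (S N)))) (mul2 (pow2 Hser N) (delta Hser)))). ring.
    rewrite Hc. ring. Qed.

Lemma PZ_pascal m N : mul2 (PZ (m - 1) (S N)) G = add2 (PZ m (S N)) (mul2 (cst (binomR (m - 1) N)) (pow2 Hser (S N))).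
Proof. rewrite G_eq. induction N.
  - rewrite !PZ_S. unfold PZ; rewrite !sum2_0. rewrite !binomR_0, cst_one. simpl pow2. ring.
  - rewrite (PZ_S (m-1) (S N)), (PZ_S m (S N)).
    rewrite mul2_addl. rewrite IHN. rewrite (binomR_pascal m N), cst_add. change (pow2 Hser (S (S N))) with (mul2 Hser (pow2 Hser (S N))). ring. Qed.

Lemma agree_Dop i c A B : agree i A B -> agree i (Dop c A) (Dop c B).
Proof. intros H. unfold Dop. apply agree_sub; auto using agree_dL.
  apply agree_mul; auto using agree_refl. apply agree_add; apply agree_mul; auto using agree_refl, agree_xdx. Qed.

Lemma DP m i : agree i (Dop (IZR m) (powZ G m)) (mul2 (cst (IZR m)) (mul2 (powZ G (m - 1)) E)).
Proof.
  apply agree_trans with (Dop (IZR m) (PZ m (S (S i)))). apply agree_Dop, PZ_agree; lia.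
  rewrite Dop_delta, PZ_delta.
  apply agree_trans with (sub2 (mul2 (cst (IZR m)) (mul2 (PZ (m - 1) (S i)) (delta Hser)))
      (mul2 (cst (IZR m)) (mul2 gm (mul2 (PZ (m - 1) (S (S i))) G)))).
  { apply agree_sub. apply agree_refl. apply agree_mul. apply agree_refl. apply agree_mul. apply agree_refl.
    rewrite PZ_pascal. intros a b h. unfold add2. rewrite mul2_cst_pt, pow_ord by lia. ring. }
  apply agree_trans with (sub2 (mul2 (cst (IZR m)) (mul2 (powZ G (m - 1)) (delta Hser)))
      (mul2 (cst (IZR m)) (mul2 gm (mul2 (powZ G (m - 1)) G)))).
  { apply agree_sub; apply agree_mul; try apply agree_refl. apply agree_mul; [|apply agree_refl].
    apply agree_sym, PZ_agree; lia. apply agree_mul; [apply agree_refl|]. apply agree_mul; [|apply agree_refl].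
    apply agree_sym, PZ_agree; lia. }
  apply agree_eq. unfold E. rewrite Dop_delta.
  replace (delta Hser) with (delta G). 2:{ rewrite G_eq, delta_add, delta_one. ring. }
  rewrite cst_one. ring. Qed.

Lemma xdx_zero : xdx zero2 = zero2.
Proof. fext. unfold xdx, zero2. ring. Qed.

Lemma Dop_add c A B : Dop c (add2 A B) = add2 (Dop c A) (Dop c B).
Proof. unfold Dop. rewrite dL_add, xdx_add. ring. Qed.
Lemma Dop_zero c : Dop c zero2 = zero2.
Proof. unfold Dop. rewrite dL_zero, xdx_zero. ring. Qed.
Lemma Dop_scal c d A : Dop c (mul2 (cst d) A) = mul2 (cst d) (Dop c A).
Proof. unfold Dop. rewrite dL_mul, dL_cst, xdx_mul, xdx_cst. ring. Qed.
Lemma Dop_dL c A : Dop c (dL A) = dL (Dop c A).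
Proof. unfold Dop. rewrite dL_sub, dL_mul, gm_dL, dL_add, !dL_mul, !dL_cst, dL_xdx. ring. Qed.
Lemma Dop_dLn c j A : Dop c (dLn j A) = dLn j (Dop c A).
Proof. induction j; simpl; [reflexivity|]. rewrite Dop_dL, IHj. reflexivity. Qed.
Lemma Dop_sum2 c N Fs : Dop c (sum2 N Fs) = sum2 N (fun j => Dop c (Fs j)).
Proof. induction N. rewrite !sum2_0, Dop_zero. reflexivity. rewrite !sum2_S, Dop_add, IHN. reflexivity. Qed.

Lemma Dop_pt c X i n : Dop c X i n = INR (S n) * X i (S n) -
  sumR (S i) (fun a => G a 1%nat * (c * X (i - a)%nat n + sR * (INR (i - a) * X (i - a)%nat n))).
Proof. unfold Dop, sub2 at 1. rewrite mul_gm_pt. unfold add2. f_equal. apply sumR_ext; intros a Ha.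
  rewrite !mul2_cst_pt. reflexivity. Qed.

Lemma Dop_shift k A : Dop 1 (shiftk k A) = shiftk k (Dop (1 + sR * INR k) A).
Proof. fext. rewrite Dop_pt. unfold shiftk. destruct (k <=? i)%nat eqn:Ek.
  - apply Nat.leb_le in Ek. rewrite Dop_pt. f_equal.
    rewrite (sumR_trunc (S i) (S (i - k))) by (try lia; intros j h1 h2;
      rewrite (proj2 (Nat.leb_gt k (i - j))) by lia; ring).
    apply sumR_ext; intros a Ha. rewrite (proj2 (Nat.leb_le k (i - a))) by lia.
    replace (i - a - k)%nat with (i - k - a)%nat by lia.
    replace (INR (i - a)) with (INR k + INR (i - k - a)) by (rewrite <- plus_INR; f_equal; lia). ring.
  - apply Nat.leb_gt in Ek.
    rewrite sumR_zero. ring. intros a Ha. rewrite (proj2 (Nat.leb_gt k (i - a))) by lia. ring. Qed.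

Definition Wn (cc : nat -> R) (X : ser2) (N : nat) : ser2 := sum2 N (fun j => mul2 (cst (cc j)) (dLn j X)).

Lemma Dop_Wn c cc X N : Dop c (Wn cc X N) = Wn cc (Dop c X) N.
Proof. unfold Wn. rewrite Dop_sum2. f_equal. apply functional_extensionality; intro j.
  rewrite Dop_scal, Dop_dLn. reflexivity. Qed.
Lemma Wn_pt cc X N i l : Wn cc X N i l = sumR N (fun j => cc j * dLn j X i l).
Proof. unfold Wn, sum2. apply sumR_ext; intros. apply mul2_cst_pt. Qed.
Lemma Wn_agree cc X Y N i l : agree i X Y -> Wn cc X N i l = Wn cc Y N i l.
Proof. intros H. rewrite !Wn_pt. apply sumR_ext; intros j _. rewrite (agree_dLn i j X Y H); auto. Qed.
Lemma Wn_stable cc X N N' i l : degb 0 X -> (i < N)%nat -> (i < N')%nat -> Wn cc X N i l = Wn cc X N' i l.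
Proof. intros H h1 h2. rewrite !Wn_pt. pose proof (fun j => degb_dLn j _ H) as HD.
  rewrite (sumR_trunc N (S i)), (sumR_trunc N' (S i)); try lia; auto;
  intros j h3 h4; rewrite HD by lia; ring. Qed.
Lemma dLn_zero j : dLn j zero2 = zero2.
Proof. induction j; simpl; [reflexivity|]. rewrite IHj; apply dL_zero. Qed.
Lemma Wn_zero cc N i l : Wn cc zero2 N i l = 0.
Proof. rewrite Wn_pt. apply sumR_zero; intros. rewrite dLn_zero. unfold zero2; ring. Qed.

Definition cc (H : nat -> nat -> R) (k j : nat) : R := (-1) ^ (S j) * H k j.
Definition mt (t : nat) : Z := (1 + s * Z.of_nat (S t))%Z.
Definition Pt (t : nat) : ser2 := powZ G (mt t).
Definition PsiN (H : nat -> nat -> R) (N : nat) : ser2 :=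
  sum2 N (fun t => shiftk (S t) (Wn (cc H (S t)) (Pt t) N)).
Definition Psi (H : nat -> nat -> R) : ser2 := fun i l => PsiN H (S i) i l.

Lemma PsiN_pt H N a b : (a < N)%nat -> PsiN H N a b = sumR a (fun t => Wn (cc H (S t)) (Pt t) N (a - S t)%nat b).
Proof. intros h. unfold PsiN, sum2. rewrite (sumR_trunc N a); try lia.
  apply sumR_ext; intros t ht. unfold shiftk. rewrite (proj2 (Nat.leb_le (S t) a)) by lia. reflexivity.
  intros j h1 h2. unfold shiftk. rewrite (proj2 (Nat.leb_gt (S j) a)) by lia. reflexivity. Qed.

Lemma PsiN_stable H N N' a b : (a < N)%nat -> (a < N')%nat -> PsiN H N a b = PsiN H N' a b.
Proof. intros h1 h2. rewrite !PsiN_pt by auto. apply sumR_ext; intros t ht. apply Wn_stable; try lia.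
  apply powZ_degb. Qed.

Lemma Psi_agree H i : agree i (Psi H) (PsiN H (S i)).
Proof. intros a b h. unfold Psi. apply PsiN_stable; lia. Qed.

Lemma mt_IZR t : IZR (mt t) = 1 + sR * INR (S t).
Proof. unfold mt, sR. rewrite plus_IZR, mult_IZR, <- INR_IZR_INZ. reflexivity. Qed.

Lemma DPsiN H N : Dop 1 (PsiN H N) = sum2 N (fun t => shiftk (S t) (Wn (cc H (S t)) (Dop (IZR (mt t)) (Pt t)) N)).
Proof. unfold PsiN. rewrite Dop_sum2. f_equal. apply functional_extensionality; intro t.
  rewrite Dop_shift, Dop_Wn, mt_IZR. reflexivity. Qed.

Lemma DPsi_vanish H i l : (forall i' b, (i' < i)%nat -> E i' b = 0) -> Dop 1 (Psi H) i l = 0.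
Proof. intros HE. rewrite (agree_Dop i 1 _ _ (Psi_agree H i)) by lia. rewrite DPsiN.
  unfold sum2. apply sumR_zero; intros t ht. unfold shiftk. destruct (S t <=? i)%nat eqn:Et; [|reflexivity].
  apply Nat.leb_le in Et. rewrite (Wn_agree _ _ zero2). apply Wn_zero.
  eapply agree_trans. apply DP. intros a b h. rewrite mul2_cst_pt.
  rewrite (agree_mul (i - S t) (powZ G (mt t - 1)) E (powZ G (mt t - 1)) zero2); auto using agree_refl.
  unfold mul2, zero2. rewrite sumR_zero. ring. intros; apply sumR_zero; intros; ring.
  intros a' b' h'. apply HE. lia. Qed.

Lemma m1sq l : (-1) ^ l * (-1) ^ l = 1.
Proof. induction l; simpl. ring. transitivity ((-1)^l * (-1)^l). ring. exact IHl. Qed.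

Lemma dA0 f n l : INR (S l) * derivAt0 f n (S l) =
  if (l <=? n)%nat then (-1) ^ (S (n - l)) * f (n - l)%nat * (INR (fact n) / INR (fact l)) else 0.
Proof. unfold derivAt0, expF. rewrite (sumR_single _ (S l)).
  2:{ intros q hq hne. unfold expm1coef. rewrite (proj2 (Nat.eqb_neq (S l) q)) by lia. rewrite Bool.andb_false_r. ring. }
  destruct (l <=? n)%nat eqn:El.
  - apply Nat.leb_le in El. rewrite (proj2 (Nat.ltb_lt (S l) (S (S n)))) by lia.
    unfold expm1coef. rewrite Nat.eqb_refl. simpl andb. cbv iota.
    replace (n + 1 - S l)%nat with (n - l)%nat by lia.
    replace n with ((n - l) + l)%nat at 1 by lia. rewrite pow_add.
    change (fact (S l)) with (S l * fact l)%nat. rewrite mult_INR.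
    change ((-1) ^ (S l)) with (-1 * (-1) ^ l). change ((-1) ^ (S (n - l))) with (-1 * (-1) ^ (n - l)).
    assert (hf : INR (fact l) <> 0) by (apply not_0_INR, fact_neq_0).
    assert (hs : INR (S l) <> 0) by (apply not_0_INR; lia).
    pose proof (m1sq l) as hm.
    transitivity ((-1) ^ (n - l) * ((-1) ^ l * (-1) ^ l) * (-1) * f (n - l)%nat * (INR (fact n) / INR (fact l))).
    field. auto. rewrite hm. ring.
  - apply Nat.leb_gt in El. rewrite (proj2 (Nat.ltb_ge (S l) (S (S n)))) by lia. ring. Qed.

Lemma DSE_Psi H i l : INR (S l) * DSEsum G s H i (S l) = Psi H i l.
Proof. unfold Psi. rewrite PsiN_pt by lia. unfold DSEsum. rewrite <- sumR_scal. apply sumR_ext; intros t ht.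
  set (i' := (i - S t)%nat). unfold opDSE. rewrite <- sumR_scal. rewrite Wn_pt.
  rewrite (sumR_ext (S i') _ (fun n => if (l <=? n)%nat then (fun j => cc H (S t) j * dLn j (Pt t) i' l) (n - l)%nat else 0)).
  2:{ intros n hn. rewrite <- Rmult_assoc, (Rmult_comm (INR (S l))), Rmult_assoc, dA0.
      destruct (l <=? n)%nat eqn:El; [|ring]. apply Nat.leb_le in El. cbv beta. rewrite dLn_pt.
      replace (l + (n - l))%nat with n by lia. unfold cc, Pt, mt. ring. }
  rewrite (sumR_offset (S i') l (fun j => cc H (S t) j * dLn j (Pt t) i' l)). symmetry. apply sumR_trunc. lia.
  intros j h1 h2. rewrite (degb_dLn j (Pt t) (powZ_degb _)) by lia. ring. Qed.

Lemma DSE_L0 H i : DSEsum G s H i 0%nat = 0.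
Proof. unfold DSEsum. apply sumR_zero; intros. unfold opDSE. apply sumR_zero; intros. unfold derivAt0, expF.
  rewrite sumR_zero. ring. intros q _. unfold expm1coef. destruct q; simpl; ring. Qed.

Lemma dLG : dL G = mul2 (cst (sgnR s)) (Psi F).
Proof. fext. rewrite mul2_cst_pt. unfold dL. rewrite hsol. unfold one2. simpl andb. rewrite Bool.andb_false_r.
  rewrite <- DSE_Psi. ring. Qed.

Lemma E_L0 i : E i 0%nat = 0.
Proof. unfold E. rewrite Dop_pt. rewrite (sumR_single _ i).
  - rewrite (proj2 (Nat.ltb_lt i (S i))) by lia. rewrite Nat.sub_diag, G_L0. unfold one2. simpl. ring.
  - intros q hq hne. rewrite G_L0. unfold one2. rewrite (proj2 (Nat.eqb_neq (i - q) 0)) by lia. simpl. ring. Qed.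

Lemma E_zero : forall i l, E i l = 0.
Proof. assert (forall N i, (i < N)%nat -> forall l, E i l = 0).
  { induction N; intros i hi; [lia|]. intros l. induction l. apply E_L0.
    assert (h : INR (S l) * E i (S l) = 0).
    { change (INR (S l) * E i (S l)) with (dL E i l). unfold E. rewrite <- Dop_dL, dLG, Dop_scal, mul2_cst_pt.
      rewrite DPsi_vanish. ring. intros; apply IHN; lia. }
    apply Rmult_integral in h. destruct h as [h|h]; auto. exfalso; apply (not_0_INR (S l)); auto. }
  intros i l; apply (H (S i)); lia. Qed.

Lemma Psi_unique H1 H2 : (forall i, Psi H1 i 0%nat = Psi H2 i 0%nat) -> forall i l, Psi H1 i l = Psi H2 i l.
Proof. intros H0. assert (forall N i, (i < N)%nat -> forall l, Psi H1 i l = Psi H2 i l).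
  { induction N; intros i hi; [lia|]. intros l. induction l. apply H0.
    pose proof (DPsi_vanish H1 i l (fun i' b _ => E_zero i' b)) as h1.
    pose proof (DPsi_vanish H2 i l (fun i' b _ => E_zero i' b)) as h2.
    rewrite Dop_pt in h1, h2.
    assert (hs : sumR (S i) (fun a => G a 1%nat * (1 * Psi H1 (i - a)%nat l + sR * (INR (i - a) * Psi H1 (i - a)%nat l)))
              = sumR (S i) (fun a => G a 1%nat * (1 * Psi H2 (i - a)%nat l + sR * (INR (i - a) * Psi H2 (i - a)%nat l)))).
    { apply sumR_ext; intros a ha. destruct a. rewrite G01; ring. rewrite (IHN (i - S a)%nat) by lia. reflexivity. }
    rewrite hs in h1. assert (h : INR (S l) * (Psi H1 i (S l) - Psi H2 i (S l)) = 0) by lra.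
    apply Rmult_integral in h. destruct h as [h|h]. exfalso; apply (not_0_INR (S l)); auto. lra. }
  intros i l; apply (H (S i)); lia. Qed.

Lemma DSE_det H1 H2 : (forall i, DSEsum G s H1 i 1%nat = DSEsum G s H2 i 1%nat) ->
  forall i l, DSEsum G s H1 i l = DSEsum G s H2 i l.
Proof. intros H0 i l. destruct l. rewrite !DSE_L0; reflexivity.
  assert (h : INR (S l) * DSEsum G s H1 i (S l) = INR (S l) * DSEsum G s H2 i (S l)).
  { rewrite !DSE_Psi. apply Psi_unique. intros j. rewrite <- !DSE_Psi, H0. reflexivity. }
  apply Rmult_eq_reg_l in h; auto. apply not_0_INR; lia. Qed.

Lemma DSE_dep H1 H2 i l : (forall k j, (1 <= k)%nat -> (k <= i)%nat -> H1 k j = H2 k j) ->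
  DSEsum G s H1 i l = DSEsum G s H2 i l.
Proof. intros H. unfold DSEsum. apply sumR_ext; intros t ht.
  replace (H1 (S t)) with (H2 (S t)). reflexivity. apply functional_extensionality; intros j. symmetry; apply H; lia. Qed.

Lemma last_term m f : opDSE G m f 0%nat 1%nat = - f 0%nat.
Proof. unfold opDSE, powZ, derivAt0, expF, expm1coef. simpl. rewrite binomR_0. unfold one2. simpl. field. Qed.

Lemma affine H1 H2 i : (1 <= i)%nat -> (forall k j, (1 <= k)%nat -> (k < i)%nat -> H1 k j = H2 k j) ->
  DSEsum G s H1 i 1%nat - DSEsum G s H2 i 1%nat = - (H1 i 0%nat - H2 i 0%nat).
Proof. intros hi H. destruct i as [|i']; [lia|]. unfold DSEsum.
  change (sumR (S i') ?f) with (sumR i' f + f i'). cbv beta. rewrite Nat.sub_diag, !last_term.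
  rewrite (sumR_ext i' (fun t => opDSE G _ (H1 (S t)) _ _) (fun t => opDSE G (1 + s * Z.of_nat (S t)) (H2 (S t)) (S i' - S t)%nat 1%nat)).
  ring. intros t ht. replace (H1 (S t)) with (H2 (S t)). reflexivity.
  apply functional_extensionality; intros j. symmetry; apply H; lia. Qed.

Variable g : nat -> nat -> R.
Hypothesis hg : forall k, (1 <= k)%nat -> g k 0%nat = 1.

Definition rg (r : nat -> R) : nat -> nat -> R := fun k j => r k * g k j.
Definition Qf (H : nat -> nat -> R) (i : nat) : R := DSEsum G s H i 1%nat.

Fixpoint rf (N : nat) : nat -> R :=
  match N with
  | O => fun _ => 0
  | S N' => fun k => if (k =? S N')%nat then rf N' (S N') + (Qf (rg (rf N')) (S N') - Qf F (S N')) else rf N' k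
  end.

Lemma rf_stable M N k : (N <= M)%nat -> (k <= N)%nat -> rf M k = rf N k.
Proof. revert N; induction M; intros N h1 h2. replace N with 0%nat by lia; reflexivity.
  destruct (Nat.eq_dec N (S M)). subst; reflexivity.
  simpl. rewrite (proj2 (Nat.eqb_neq k (S M))) by lia. apply IHM; lia. Qed.

Lemma rf_correct N i : (1 <= i)%nat -> (i <= N)%nat -> Qf (rg (rf N)) i = Qf F i.
Proof. revert i; induction N; intros i h1 h2; [lia|].
  destruct (Nat.eq_dec i (S N)).
  - subst. assert (ha := affine (rg (rf (S N))) (rg (rf N)) (S N) h1).
    assert (hb : forall k j, (1 <= k)%nat -> (k < S N)%nat -> rg (rf (S N)) k j = rg (rf N) k j).
    { intros k j hk1 hk2. unfold rg. simpl. rewrite (proj2 (Nat.eqb_neq k (S N))) by lia. reflexivity. }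
    specialize (ha hb). unfold rg at 3 4 in ha. rewrite hg in ha by lia. simpl rf in ha. rewrite Nat.eqb_refl in ha.
    unfold Qf in *. simpl rf. unfold Qf. lra.
  - unfold Qf. rewrite (DSE_dep _ (rg (rf N))). apply IHN; lia.
    intros k j hk1 hk2. unfold rg. simpl. rewrite (proj2 (Nat.eqb_neq k (S N))) by lia. reflexivity. Qed.

Definition rdef (k : nat) : R := rf k k.

Lemma r_correct i : Qf (rg rdef) i = Qf F i.
Proof. destruct i as [|i']. reflexivity. rewrite <- (rf_correct (S i') (S i')) by lia.
  unfold Qf. apply DSE_dep. intros k j h1 h2. unfold rg, rdef. rewrite (rf_stable (S i') k k) by lia. reflexivity. Qed.

Lemma main_sec : exists r : nat -> R,
    (forall i l, DSEsum G s F i l = DSEsum G s (fun k j => r k * g k j) i l) /\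
    (forall r' : nat -> R,
       (forall i l, DSEsum G s F i l = DSEsum G s (fun k j => r' k * g k j) i l) ->
       forall k, (1 <= k)%nat -> r' k = r k).
Proof. exists rdef. split.
  - apply DSE_det. intros i. symmetry. apply r_correct.
  - intros r' hr'. assert (forall N k, (1 <= k)%nat -> (k < N)%nat -> r' k = rdef k).
    { induction N; intros k h1 h2; [lia|].
      assert (ha := affine (rg r') (rg rdef) k h1).
      assert (hb : forall k' j, (1 <= k')%nat -> (k' < k)%nat -> rg r' k' j = rg rdef k' j).
      { intros k' j hk1 hk2. unfold rg. rewrite IHN by lia. reflexivity. }
      specialize (ha hb). unfold rg at 3 4 in ha. rewrite hg in ha by lia.
      pose proof (r_correct k) as hc. pose proof (hr' k 1%nat) as hd. unfold Qf, rg in hc. unfold rg in ha.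
      lra. }
    intros k hk; apply (H (S k)); lia.
Qed.

End Main.

Theorem mainTheorem1 (s : Z) (F : nat -> nat -> R) (G : ser2)
  (g : nat -> nat -> R)
  (hform : DSE_form s G)
  (hsol : DSE_solution s F G)
  (hg : forall k, (1 <= k)%nat -> g k O = 1) :
  exists r : nat -> R,
    (forall i l, DSEsum G s F i l = DSEsum G s (fun k j => r k * g k j) i l) /\
    (forall r' : nat -> R,
       (forall i l, DSEsum G s F i l = DSEsum G s (fun k j => r' k * g k j) i l) ->
       forall k, (1 <= k)%nat -> r' k = r k).
Proof.
  apply main_sec; assumption.
Qed.
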